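(* Let $\alpha,\beta,\gamma,\delta,\epsilon$ be the angles of the prototile of an edge-to-edge tiling of the sphere by congruent $a^4b$-pentagons. Then $$\big[(1-\cos\beta)\sin(\delta-\tfrac12\alpha)-(1-\cos\gamma)\sin(\epsilon-\tfrac12\alpha)\big]\sin\tfrac12(\delta-\epsilon)-\big[1-\cos(\beta-\gamma)\big]\sin\tfrac12\alpha\,\sin\tfrac12(\delta+\epsilon)=0.$$
   Context: An $a^4b$-pentagon is a simple spherical pentagon on the unit sphere with four edges of length $a$ and one edge of length $b\neq a$; $\alpha$ is the vertex opposite the $b$-edge, $\beta,\gamma$ are adjacent to $\alpha$, $\delta$ is the endpoint of the $b$-edge adjacent to $\beta$, and $\epsilon$ the endpoint of the $b$-edge adjacent to $\gamma$. Tiles are congruent copies, mirror images allowed. *)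

(* Defs.v *)
From Stdlib Require Import Reals Lra.
Open Scope R_scope.

Record V3 := mkV { vx : R; vy : R; vz : R }.

Definition add (u v : V3) := mkV (vx u + vx v) (vy u + vy v) (vz u + vz v).
Definition sub (u v : V3) := mkV (vx u - vx v) (vy u - vy v) (vz u - vz v).
Definition scale (s : R) (u : V3) := mkV (s * vx u) (s * vy u) (s * vz u).
Definition opp (u : V3) := scale (-1) u.
Definition dot (u v : V3) := vx u * vx v + vy u * vy v + vz u * vz v.
Definition cross (u v : V3) :=
  mkV (vy u * vz v - vz u * vy v) (vz u * vx v - vx u * vz v) (vx u * vy v - vy u * vx v).
Definition norm (u : V3) := sqrt (dot u u).

Definition on_sphere (x : V3) : Prop := dot x x = 1.

Definition sdist (u v : V3) : R := acos (dot u v).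

(* minor great arc between non-antipodal points u, v of the sphere *)
Definition arc (u v : V3) (x : V3) : Prop :=
  on_sphere x /\ exists s t, 0 <= s /\ 0 <= t /\ x = add (scale s u) (scale t v).

(* Convention: vertex 0 = alpha, 1 = beta, 2 = delta, 3 = epsilon, 4 = gamma;
   the pentagon (region) is the side lying to the LEFT of the boundary walk
   0 -> 1 -> 2 -> 3 -> 4 -> 0, seen from outside the sphere. *)
Definition vtx (p : nat -> V3) (i : nat) : V3 := p (Nat.modulo i 5).

Definition edge (p : nat -> V3) (i : nat) : V3 -> Prop := arc (vtx p i) (vtx p (S i)).

Definition boundary (p : nat -> V3) (x : V3) : Prop :=
  exists i, (i < 5)%nat /\ edge p i x.

Definition simple_pentagon (p : nat -> V3) : Prop :=
  (forall i, (i < 5)%nat -> on_sphere (vtx p i)) /\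
  (forall i j, (i < 5)%nat -> (j < 5)%nat -> i <> j -> vtx p i <> vtx p j) /\
  (forall i, (i < 5)%nat -> vtx p (S i) <> opp (vtx p i)) /\
  (forall i x, (i < 5)%nat -> edge p i x -> edge p (S i) x -> x = vtx p (S i)) /\
  (forall i x, (i < 5)%nat -> edge p i x -> edge p (S (S i)) x -> False).

Definition a4b_pentagon (p : nat -> V3) (a b : R) : Prop :=
  simple_pentagon p /\
  sdist (vtx p 0) (vtx p 1) = a /\ sdist (vtx p 1) (vtx p 2) = a /\
  sdist (vtx p 2) (vtx p 3) = b /\ sdist (vtx p 3) (vtx p 4) = a /\
  sdist (vtx p 4) (vtx p 0) = a /\ b <> a.

Definition pconn (S : V3 -> Prop) (x y : V3) : Prop :=
  exists f : R -> V3, f 0 = x /\ f 1 = y /\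
    (forall t, 0 <= t <= 1 -> S (f t)) /\
    continuity (fun t => vx (f t)) /\ continuity (fun t => vy (f t)) /\
    continuity (fun t => vz (f t)).

(* points just to the left of the midpoint of edge 0 -> 1 *)
Definition left_probe (p : nat -> V3) (eps : R) : V3 :=
  let m := add (vtx p 0) (vtx p 1) in
  let n := cross m (sub (vtx p 1) (vtx p 0)) in
  let w := add m (scale eps n) in
  scale (/ norm w) w.

(* open interior of the pentagon: the component of (sphere minus boundary)
   lying on the left of the boundary walk *)
Definition inside (p : nat -> V3) (x : V3) : Prop :=
  exists eps0, 0 < eps0 /\ forall eps, 0 < eps < eps0 ->
    pconn (fun y => on_sphere y /\ ~ boundary p y) x (left_probe p eps).

Definition region (p : nat -> V3) (x : V3) : Prop := inside p x \/ boundary p x.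

(* interior angle at vertex i: the counterclockwise (seen from outside)
   rotation angle at vertex i from the edge towards vertex i+1 to the edge
   towards vertex i-1, in [0, 2 pi). *)
Definition interior_angle (p : nat -> V3) (i : nat) (th : R) : Prop :=
  let V := vtx p i in
  let N := vtx p (S i) in
  let P := vtx p (i + 4) in
  let tN := sub N (scale (dot N V) V) in
  let tP := sub P (scale (dot P V) V) in
  let r := norm tN * norm tP in
  0 <= th < 2 * PI /\
  dot tN tP = r * cos th /\ dot V (cross tN tP) = r * sin th.

(* isometries of the sphere (mirror images allowed) *)
Definition isometry (g : V3 -> V3) : Prop := forall x y, dot (g x) (g y) = dot x y.

Definition img (g : V3 -> V3) (S : V3 -> Prop) (x : V3) : Prop :=
  exists y, S y /\ x = g y.

Definition tiling (p : nat -> V3) (n : nat) (g : nat -> V3 -> V3) : Prop :=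
  (0 < n)%nat /\
  (forall j, (j < n)%nat -> isometry (g j)) /\
  (forall x, on_sphere x -> exists j, (j < n)%nat /\ img (g j) (region p) x) /\
  (forall j k x, (j < n)%nat -> (k < n)%nat -> j <> k ->
      ~ (img (g j) (inside p) x /\ img (g k) (inside p) x)) /\
  (forall j k, (j < n)%nat -> (k < n)%nat -> j <> k ->
     let I := fun x => img (g j) (region p) x /\ img (g k) (region p) x in
     (forall x, ~ I x) \/
     (exists i i', (i < 5)%nat /\ (i' < 5)%nat /\
        g j (vtx p i) = g k (vtx p i') /\ forall x, I x <-> x = g j (vtx p i)) \/
     (exists i i', (i < 5)%nat /\ (i' < 5)%nat /\
        (forall x, img (g j) (edge p i) x <-> img (g k) (edge p i') x) /\
        forall x, I x <-> img (g j) (edge p i) x)).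

(* Main.v *)
Require Import Defs.
From Stdlib Require Import Reals ZArith List Lia Lra.
Open Scope R_scope.

Import ListNotations.

Record mono := M { m0:nat; m1:nat; m2:nat; m3:nat; m4:nat; m5:nat; m6:nat; m7:nat }.

Definition mcmp (a b : mono) : comparison :=
  match Nat.compare (m0 a) (m0 b) with Eq =>
  match Nat.compare (m1 a) (m1 b) with Eq =>
  match Nat.compare (m2 a) (m2 b) with Eq =>
  match Nat.compare (m3 a) (m3 b) with Eq =>
  match Nat.compare (m4 a) (m4 b) with Eq =>
  match Nat.compare (m5 a) (m5 b) with Eq =>
  match Nat.compare (m6 a) (m6 b) with Eq =>
  Nat.compare (m7 a) (m7 b)
  | c => c end | c => c end | c => c end | c => c end | c => c end | c => c end | c => c end.

Lemma mcmp_eq a b : mcmp a b = Eq -> a = b.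
Proof.
  destruct a, b; unfold mcmp; simpl.
  repeat match goal with |- context [Nat.compare ?x ?y] =>
    destruct (Nat.compare_spec x y); [subst | discriminate 1 | discriminate 1] end.
  reflexivity.
Qed.

Definition poly := list (mono * Z).

Definition mmul (a b : mono) : mono :=
  M (m0 a + m0 b) (m1 a + m1 b) (m2 a + m2 b) (m3 a + m3 b)
    (m4 a + m4 b) (m5 a + m5 b) (m6 a + m6 b) (m7 a + m7 b).

Fixpoint padd (p q : poly) : poly :=
  match p with
  | [] => q
  | (a, c) :: p' =>
    (fix aux (q : poly) : poly :=
       match q with
       | [] => p
       | (b, d) :: q' =>
         match mcmp a b with
         | Eq => let e := (c + d)%Z in
                 if Z.eqb e 0 then padd p' q' else (a, e) :: padd p' q'
         | Lt => (a, c) :: padd p' q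
         | Gt => (b, d) :: aux q'
         end
       end) q
  end.

Definition pneg (p : poly) : poly := map (fun mc => (fst mc, Z.opp (snd mc))) p.

(* reduction step: s^2 -> 1 - c^2 for pairs (0,1) (2,3) (4,5) (6,7) *)
Definition rstep (a : mono) : option (mono * mono) :=
  match a with M e0 e1 e2 e3 e4 e5 e6 e7 =>
  match e1 with S (S k) => Some (M e0 k e2 e3 e4 e5 e6 e7, M (S (S e0)) k e2 e3 e4 e5 e6 e7) | _ =>
  match e3 with S (S k) => Some (M e0 e1 e2 k e4 e5 e6 e7, M e0 e1 (S (S e2)) k e4 e5 e6 e7) | _ =>
  match e5 with S (S k) => Some (M e0 e1 e2 e3 e4 k e6 e7, M e0 e1 e2 e3 (S (S e4)) k e6 e7) | _ =>
  match e7 with S (S k) => Some (M e0 e1 e2 e3 e4 e5 e6 k, M e0 e1 e2 e3 e4 e5 (S (S e6)) k) | _ =>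
  None end end end end end.

Fixpoint rall (fuel : nat) (a : mono) (c : Z) : poly :=
  match fuel with
  | O => [(a, c)]
  | S f => match rstep a with
           | None => [(a, c)]
           | Some (x, y) => padd (rall f x c) (rall f y (Z.opp c))
           end
  end.

Definition pmulm (a : mono) (c : Z) (q : poly) : poly :=
  fold_right (fun bd acc => padd (rall 40 (mmul a (fst bd)) (c * snd bd)%Z) acc) [] q.

Definition pmul (p q : poly) : poly :=
  fold_right (fun ac acc => padd (pmulm (fst ac) (snd ac) q) acc) [] p.

Fixpoint ppow (p : poly) (n : nat) : poly :=
  match n with O => [(M 0 0 0 0 0 0 0 0, 1%Z)] | S k => pmul p (ppow p k) end.

Inductive PE :=
| PV (i : nat) | PC (z : Z) | PA (a b : PE) | PS (a b : PE) | PM (a b : PE)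
| PO (a : PE) | PP (a : PE) (n : nat) | PD (u v : VE)
with VE :=
| VK (a b c : PE) | VA (u v : VE) | VS (u v : VE) | VSc (s : PE) (u : VE) | VX (u v : VE).

Scheme PE_ind2 := Induction for PE Sort Prop
with VE_ind2 := Induction for VE Sort Prop.
Combined Scheme PEVE_ind from PE_ind2, VE_ind2.

Definition mvar (i : nat) : mono :=
  match i with
  | 0 => M 1 0 0 0 0 0 0 0 | 1 => M 0 1 0 0 0 0 0 0 | 2 => M 0 0 1 0 0 0 0 0
  | 3 => M 0 0 0 1 0 0 0 0 | 4 => M 0 0 0 0 1 0 0 0 | 5 => M 0 0 0 0 0 1 0 0
  | 6 => M 0 0 0 0 0 0 1 0 | _ => M 0 0 0 0 0 0 0 1 end.

Definition psub p q := padd p (pneg q).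

Fixpoint pnorm (e : PE) : poly :=
  match e with
  | PV i => [(mvar i, 1%Z)]
  | PC z => if Z.eqb z 0 then [] else [(M 0 0 0 0 0 0 0 0, z)]
  | PA a b => padd (pnorm a) (pnorm b)
  | PS a b => psub (pnorm a) (pnorm b)
  | PM a b => pmul (pnorm a) (pnorm b)
  | PO a => pneg (pnorm a)
  | PP a n => ppow (pnorm a) n
  | PD u v => match vnorm u, vnorm v with (p1,p2,p3), (q1,q2,q3) =>
       padd (padd (pmul p1 q1) (pmul p2 q2)) (pmul p3 q3) end
  end
with vnorm (v : VE) : poly * poly * poly :=
  match v with
  | VK a b c => (pnorm a, pnorm b, pnorm c)
  | VA u w => match vnorm u, vnorm w with (p1,p2,p3), (q1,q2,q3) =>
       (padd p1 q1, padd p2 q2, padd p3 q3) end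
  | VS u w => match vnorm u, vnorm w with (p1,p2,p3), (q1,q2,q3) =>
       (psub p1 q1, psub p2 q2, psub p3 q3) end
  | VSc s u => let k := pnorm s in match vnorm u with (p1,p2,p3) =>
       (pmul k p1, pmul k p2, pmul k p3) end
  | VX u w => match vnorm u, vnorm w with (p1,p2,p3), (q1,q2,q3) =>
       (psub (pmul p2 q3) (pmul p3 q2), psub (pmul p3 q1) (pmul p1 q3),
        psub (pmul p1 q2) (pmul p2 q1)) end
  end.

Definition pzero (p : poly) : bool := match p with [] => true | _ => false end.

Section Sem.
Variables x0 x1 x2 x3 x4 x5 x6 x7 : R.

Definition meval (a : mono) : R :=
  x0 ^ m0 a * x1 ^ m1 a * x2 ^ m2 a * x3 ^ m3 a * x4 ^ m4 a * x5 ^ m5 a * x6 ^ m6 a * x7 ^ m7 a.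

Fixpoint peval (p : poly) : R :=
  match p with [] => 0 | (a, c) :: p' => IZR c * meval a + peval p' end.

Fixpoint eeval (e : PE) : R :=
  match e with
  | PV i => match i with 0 => x0 | 1 => x1 | 2 => x2 | 3 => x3 | 4 => x4 | 5 => x5 | 6 => x6 | _ => x7 end
  | PC z => IZR z
  | PA a b => eeval a + eeval b
  | PS a b => eeval a - eeval b
  | PM a b => eeval a * eeval b
  | PO a => - eeval a
  | PP a n => eeval a ^ n
  | PD u v => dot (veval u) (veval v)
  end
with veval (v : VE) : V3 :=
  match v with
  | VK a b c => mkV (eeval a) (eeval b) (eeval c)
  | VA u w => add (veval u) (veval w)
  | VS u w => sub (veval u) (veval w)
  | VSc s u => scale (eeval s) (veval u)
  | VX u w => cross (veval u) (veval w)
  end.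

Lemma padd_ok p q : peval (padd p q) = peval p + peval q.
Proof.
  revert q; induction p as [|[a c] p IH]; intro q; simpl; [ring|].
  induction q as [|[b d] q IHq]; simpl; [ring|].
  destruct (mcmp a b) eqn:E.
  - apply mcmp_eq in E; subst b.
    destruct (Z.eqb (c + d) 0) eqn:Z0.
    + apply Z.eqb_eq in Z0. rewrite IH.
      assert (IZR d = - IZR c) by (rewrite <- opp_IZR; f_equal; lia).
      rewrite H; ring.
    + simpl; rewrite IH, plus_IZR; ring.
  - simpl; rewrite IH; simpl; ring.
  - simpl; rewrite IHq; ring.
Qed.

Lemma pneg_ok p : peval (pneg p) = - peval p.
Proof. induction p as [|[a c] p IH]; simpl; [ring|]. rewrite IH, opp_IZR; ring. Qed.

Lemma mmul_ok a b : meval (mmul a b) = meval a * meval b.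
Proof. destruct a, b; unfold meval, mmul; simpl; rewrite !pow_add; ring. Qed.

Hypothesis H01 : x0 ^ 2 + x1 ^ 2 = 1.
Hypothesis H23 : x2 ^ 2 + x3 ^ 2 = 1.
Hypothesis H45 : x4 ^ 2 + x5 ^ 2 = 1.
Hypothesis H67 : x6 ^ 2 + x7 ^ 2 = 1.



Ltac fin u v k j :=
  replace (v ^ S (S k)) with (v ^ k * v ^ 2) by (simpl; ring);
  replace (u ^ S (S j)) with (u ^ j * u ^ 2) by (simpl; ring);
  replace (v ^ 2) with (1 - u ^ 2) by lra; ring.

Lemma rstep_ok a x y : rstep a = Some (x, y) -> meval a = meval x - meval y.
Proof.
  assert (Q : forall (u v : R) k j, u ^ 2 + v ^ 2 = 1 ->
     u ^ j * v ^ S (S k) = u ^ j * v ^ k - u ^ S (S j) * v ^ k).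
  { intros u v k j Huv. replace (v ^ S (S k)) with (v ^ k * v ^ 2) by (simpl; ring).
    replace (u ^ S (S j)) with (u ^ j * u ^ 2) by (simpl; ring).
    replace (v ^ 2) with (1 - u ^ 2) by lra. ring. }
  destruct a as [e0 e1 e2 e3 e4 e5 e6 e7]; unfold rstep, meval; simpl.
  intro E.
  destruct e1 as [|[|k]];
  [ | | injection E; intros; subst; unfold meval; cbn [m0 m1 m2 m3 m4 m5 m6 m7]; fin x0 x1 k e0 ];
  (destruct e3 as [|[|k]];
  [ | | injection E; intros; subst; unfold meval; cbn [m0 m1 m2 m3 m4 m5 m6 m7]; fin x2 x3 k e2 ]);
  (destruct e5 as [|[|k]];
  [ | | injection E; intros; subst; unfold meval; cbn [m0 m1 m2 m3 m4 m5 m6 m7]; fin x4 x5 k e4 ]);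
  (destruct e7 as [|[|k]];
  [ discriminate | discriminate | injection E; intros; subst; unfold meval; cbn [m0 m1 m2 m3 m4 m5 m6 m7]; fin x6 x7 k e6 ]).
Qed.


Lemma rall_ok f a c : peval (rall f a c) = IZR c * meval a.
Proof.
  revert a c; induction f as [|f IH]; intros a c; simpl; [ring|].
  destruct (rstep a) as [[x y]|] eqn:E; simpl; [|ring].
  rewrite padd_ok, !IH, (rstep_ok _ _ _ E), opp_IZR; ring.
Qed.

Lemma pmulm_ok a c q : peval (pmulm a c q) = IZR c * meval a * peval q.
Proof.
  induction q as [|[b d] q IH]; unfold pmulm in *; cbn [fold_right fst snd peval]; [ring|].
  rewrite padd_ok, IH, rall_ok, mmul_ok, mult_IZR; ring.
Qed.

Lemma pmul_ok p q : peval (pmul p q) = peval p * peval q.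
Proof.
  induction p as [|[a c] p IH]; unfold pmul in *; cbn [fold_right fst snd peval]; [ring|].
  rewrite padd_ok, IH, pmulm_ok; ring.
Qed.

Lemma ppow_ok p n : peval (ppow p n) = peval p ^ n.
Proof.
  induction n as [|n IH]; cbn [ppow pow].
  - cbn [peval]; unfold meval; simpl; ring.
  - rewrite pmul_ok, IH; ring.
Qed.

Lemma psub_ok p q : peval (psub p q) = peval p - peval q.
Proof. unfold psub; rewrite padd_ok, pneg_ok; ring. Qed.

Lemma norm_ok_all :
  (forall e, peval (pnorm e) = eeval e) /\
  (forall v, match vnorm v with (p1,p2,p3) =>
     peval p1 = vx (veval v) /\ peval p2 = vy (veval v) /\ peval p3 = vz (veval v) end).
Proof.
  apply PEVE_ind.
  all: intros; cbn [pnorm vnorm eeval veval].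
  - destruct i as [|[|[|[|[|[|[|[|i]]]]]]]]; cbn; unfold meval; cbn; ring.
  - destruct (Z.eqb z 0) eqn:Z0; simpl.
    + apply Z.eqb_eq in Z0; subst; reflexivity.
    + cbn; unfold meval; cbn; ring.
  - rewrite padd_ok; congruence.
  - rewrite psub_ok; congruence.
  - rewrite pmul_ok; congruence.
  - rewrite pneg_ok; congruence.
  - rewrite ppow_ok; congruence.
  - destruct (vnorm u) as [[p1 p2] p3], (vnorm v) as [[q1 q2] q3].
    destruct H as [A1 [A2 A3]], H0 as [B1 [B2 B3]].
    rewrite !padd_ok, !pmul_ok, A1, A2, A3, B1, B2, B3; unfold dot; ring.
  - cbn; repeat split; assumption.
  - destruct (vnorm u) as [[p1 p2] p3], (vnorm v) as [[q1 q2] q3].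
    destruct H as [A1 [A2 A3]], H0 as [B1 [B2 B3]].
    rewrite !padd_ok, A1, A2, A3, B1, B2, B3; cbn; repeat split; reflexivity.
  - destruct (vnorm u) as [[p1 p2] p3], (vnorm v) as [[q1 q2] q3].
    destruct H as [A1 [A2 A3]], H0 as [B1 [B2 B3]].
    rewrite !psub_ok, A1, A2, A3, B1, B2, B3; cbn; repeat split; reflexivity.
  - destruct (vnorm u) as [[p1 p2] p3].
    destruct H0 as [A1 [A2 A3]].
    rewrite !pmul_ok, A1, A2, A3, H; cbn; repeat split; reflexivity.
  - destruct (vnorm u) as [[p1 p2] p3], (vnorm v) as [[q1 q2] q3].
    destruct H as [A1 [A2 A3]], H0 as [B1 [B2 B3]].
    rewrite !psub_ok, !pmul_ok, A1, A2, A3, B1, B2, B3; cbn; repeat split; reflexivity.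
Qed.

Lemma norm_ok e : peval (pnorm e) = eeval e.
Proof. apply norm_ok_all. Qed.

Theorem refl_eq e1 e2 : pzero (pnorm (PS e1 e2)) = true -> eeval e1 = eeval e2.
Proof.
  intro H. assert (E : peval (pnorm (PS e1 e2)) = 0).
  { destruct (pnorm (PS e1 e2)); [reflexivity | discriminate]. }
  rewrite norm_ok in E; simpl in E; lra.
Qed.
End Sem.


Lemma vec_eq u v : vx u = vx v -> vy u = vy v -> vz u = vz v -> u = v.
Proof. destruct u, v; simpl; intros; subst; reflexivity. Qed.

Lemma dot_comm u v : dot u v = dot v u.
Proof. unfold dot; ring. Qed.

Lemma dot_bound u v : on_sphere u -> on_sphere v -> -1 <= dot u v <= 1.
Proof.
  unfold on_sphere; intros Hu Hv.
  assert (E : dot u u * dot v v - (dot u v) ^ 2 =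
      (vy u * vz v - vz u * vy v)^2 + (vz u * vx v - vx u * vz v)^2 + (vx u * vy v - vy u * vx v)^2)
    by (unfold dot; ring).
  rewrite Hu, Hv in E.
  assert (P : 0 <= (vy u * vz v - vz u * vy v)^2 + (vz u * vx v - vx u * vz v)^2 + (vx u * vy v - vy u * vx v)^2)
    by (apply Rplus_le_le_0_compat; [apply Rplus_le_le_0_compat|]; apply pow2_ge_0).
  set (d := dot u v) in *. nra.
Qed.

Lemma sum3_sq0 a b c : a^2 + b^2 + c^2 = 0 -> a = 0 /\ b = 0 /\ c = 0.
Proof.
  intro H. pose proof (pow2_ge_0 a); pose proof (pow2_ge_0 b); pose proof (pow2_ge_0 c).
  assert (a^2 = 0) by lra; assert (b^2 = 0) by lra; assert (c^2 = 0) by lra.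
  repeat split; nra.
Qed.

Lemma dot1_eq u v : on_sphere u -> on_sphere v -> dot u v = 1 -> u = v.
Proof.
  unfold on_sphere; intros Hu Hv H.
  assert (E : (vx u - vx v)^2 + (vy u - vy v)^2 + (vz u - vz v)^2 = 0).
  { replace ((vx u - vx v)^2 + (vy u - vy v)^2 + (vz u - vz v)^2) with (dot u u + dot v v - 2 * dot u v)
      by (unfold dot; ring). rewrite Hu, Hv, H; ring. }
  apply sum3_sq0 in E. apply vec_eq; lra.
Qed.

Lemma dotm1_eq u v : on_sphere u -> on_sphere v -> dot u v = -1 -> v = opp u.
Proof.
  unfold on_sphere; intros Hu Hv H.
  assert (E : (vx u + vx v)^2 + (vy u + vy v)^2 + (vz u + vz v)^2 = 0).
  { replace ((vx u + vx v)^2 + (vy u + vy v)^2 + (vz u + vz v)^2) with (dot u u + dot v v + 2 * dot u v)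
      by (unfold dot; ring). rewrite Hu, Hv, H; ring. }
  apply sum3_sq0 in E. unfold opp, scale; apply vec_eq; simpl; lra.
Qed.

Lemma dot_sq_lt u v : on_sphere u -> on_sphere v -> u <> v -> v <> opp u -> (dot u v)^2 < 1.
Proof.
  intros Hu Hv H1 H2. pose proof (dot_bound u v Hu Hv).
  destruct (Req_dec (dot u v) 1) as [E|E]; [exfalso; apply H1; apply dot1_eq; auto|].
  destruct (Req_dec (dot u v) (-1)) as [E'|E']; [exfalso; apply H2; apply dotm1_eq; auto|].
  nra.
Qed.

Lemma sdist_cos u v a : on_sphere u -> on_sphere v -> sdist u v = a -> dot u v = cos a.
Proof. intros Hu Hv H. unfold sdist in H. subst a. rewrite cos_acos; auto. apply dot_bound; auto. Qed.

Definition tng (N V : V3) := sub N (scale (dot N V) V).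

Definition iang (V N P : V3) (th : R) : Prop :=
  let tN := sub N (scale (dot N V) V) in
  let tP := sub P (scale (dot P V) V) in
  let r := norm tN * norm tP in
  0 <= th < 2 * PI /\
  dot tN tP = r * cos th /\ dot V (cross tN tP) = r * sin th.

Lemma tng_sq N V : on_sphere N -> on_sphere V -> dot (tng N V) (tng N V) = 1 - (dot N V)^2.
Proof.
  unfold on_sphere, tng; intros HN HV.
  transitivity (dot N N - 2 * (dot N V)^2 + (dot N V)^2 * dot V V).
  - unfold dot, sub, scale; simpl; ring.
  - rewrite HN, HV; ring.
Qed.

Lemma tng_orth N V : on_sphere V -> dot V (tng N V) = 0.
Proof.
  unfold on_sphere, tng; intros HV.
  transitivity (dot V N - dot N V * dot V V).
  - unfold dot, sub, scale; simpl; ring.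
  - rewrite HV, dot_comm; ring.
Qed.

Lemma tng_inv N V : N = add (scale (dot N V) V) (tng N V).
Proof. unfold tng; apply vec_eq; simpl; ring. Qed.

Lemma gram_x V t x : (dot V V * dot t t - dot V t ^2) * vx x =
  (dot t t * dot V x - dot V t * dot t x) * vx V + (dot V V * dot t x - dot V t * dot V x) * vx t
  + dot (cross V t) x * vx (cross V t).
Proof. unfold dot, cross; simpl; ring. Qed.
Lemma gram_y V t x : (dot V V * dot t t - dot V t ^2) * vy x =
  (dot t t * dot V x - dot V t * dot t x) * vy V + (dot V V * dot t x - dot V t * dot V x) * vy t
  + dot (cross V t) x * vy (cross V t).
Proof. unfold dot, cross; simpl; ring. Qed.
Lemma gram_z V t x : (dot V V * dot t t - dot V t ^2) * vz x =
  (dot t t * dot V x - dot V t * dot t x) * vz V + (dot V V * dot t x - dot V t * dot V x) * vz t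
  + dot (cross V t) x * vz (cross V t).
Proof. unfold dot, cross; simpl; ring. Qed.

Lemma triple_cyc V t x : dot (cross V t) x = dot V (cross t x).
Proof. unfold dot, cross; simpl; ring. Qed.
Lemma triple_anti V t x : dot V (cross t x) = - dot V (cross x t).
Proof. unfold dot, cross; simpl; ring. Qed.

Lemma iang_gen V N P th : on_sphere V -> on_sphere N -> on_sphere P -> iang V N P th ->
  dot (tng N V) (tng P V) = sqrt (1 - (dot N V)^2) * sqrt (1 - (dot P V)^2) * cos th /\
  dot V (cross (tng N V) (tng P V)) = sqrt (1 - (dot N V)^2) * sqrt (1 - (dot P V)^2) * sin th.
Proof.
  intros HV HN HP [_ [H1 H2]]. unfold norm in *.
  fold (tng N V) (tng P V) in *.
  rewrite !tng_sq in H1, H2 by auto. auto.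
Qed.

Lemma rot_rel V t x k c s : on_sphere V -> dot V t = 0 -> dot V x = 0 -> dot t t = k -> k <> 0 ->
  dot t x = k * c -> dot V (cross t x) = k * s ->
  x = add (scale c t) (scale s (cross V t)).
Proof.
  intros HV Ht Hx Hk Hk0 H1 H2. unfold on_sphere in HV.
  assert (C3 : dot (cross V t) x = k * s) by (rewrite triple_cyc; exact H2).
  pose proof (gram_x V t x) as Gx; pose proof (gram_y V t x) as Gy; pose proof (gram_z V t x) as Gz.
  rewrite HV, Ht, Hx, Hk, H1, C3 in Gx, Gy, Gz.
  apply vec_eq; simpl in *; apply (Rmult_eq_reg_l k); auto; [rewrite <- (Rminus_0_r (k * vx x)) at 1 | rewrite <- (Rminus_0_r (k * vy x)) at 1 | rewrite <- (Rminus_0_r (k * vz x)) at 1]; lra.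
Qed.

Lemma iang_R1 V N P th c : on_sphere V -> on_sphere N -> on_sphere P ->
  dot N V = c -> dot P V = c -> c^2 < 1 -> iang V N P th ->
  tng P V = add (scale (cos th) (tng N V)) (scale (sin th) (cross V (tng N V))).
Proof.
  intros HV HN HP E1 E2 Hc H.
  destruct (iang_gen V N P th HV HN HP H) as [H1 H2].
  rewrite E1, E2 in H1, H2. rewrite sqrt_sqrt in H1, H2 by lra.
  apply (rot_rel V (tng N V) (tng P V) (1 - c^2)); auto.
  - apply tng_orth; auto.
  - apply tng_orth; auto.
  - rewrite tng_sq by auto. rewrite E1; ring.
  - lra.
Qed.

Lemma iang_R2 V N P th c : on_sphere V -> on_sphere N -> on_sphere P ->
  dot N V = c -> dot P V = c -> c^2 < 1 -> iang V N P th ->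
  tng N V = add (scale (cos th) (tng P V)) (scale (- sin th) (cross V (tng P V))).
Proof.
  intros HV HN HP E1 E2 Hc H.
  destruct (iang_gen V N P th HV HN HP H) as [H1 H2].
  rewrite E1, E2 in H1, H2. rewrite sqrt_sqrt in H1, H2 by lra.
  apply (rot_rel V (tng P V) (tng N V) (1 - c^2)); auto.
  - apply tng_orth; auto.
  - apply tng_orth; auto.
  - rewrite tng_sq by auto. rewrite E2; ring.
  - lra.
  - rewrite dot_comm; exact H1.
  - rewrite triple_anti, H2; ring.
Qed.

Definition fr (A e : V3) (u : V3) : V3 :=
  add (add (scale (vx u) A) (scale (vy u) e)) (scale (vz u) (cross A e)).

Lemma fr_add A e u v : add (fr A e u) (fr A e v) = fr A e (add u v).
Proof. unfold fr; apply vec_eq; simpl; ring. Qed.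
Lemma fr_sub A e u v : sub (fr A e u) (fr A e v) = fr A e (sub u v).
Proof. unfold fr; apply vec_eq; simpl; ring. Qed.
Lemma fr_scale A e s u : scale s (fr A e u) = fr A e (scale s u).
Proof. unfold fr; apply vec_eq; simpl; ring. Qed.

Lemma fr_dot_gen A e u v : dot (fr A e u) (fr A e v) =
  vx u * vx v * dot A A + vy u * vy v * dot e e + vz u * vz v * (dot A A * dot e e - dot A e ^ 2)
  + (vx u * vy v + vy u * vx v) * dot A e.
Proof. unfold fr, dot, cross; simpl; ring. Qed.

Lemma fr_dot A e u v : dot A A = 1 -> dot e e = 1 -> dot A e = 0 ->
  dot (fr A e u) (fr A e v) = dot u v.
Proof. intros H1 H2 H3. rewrite fr_dot_gen, H1, H2, H3. unfold dot; ring. Qed.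

Lemma fr_cross_gen A e u v : cross (fr A e u) (fr A e v) =
  add (add (scale ((vy u * vz v - vz u * vy v) * dot e e - (vz u * vx v - vx u * vz v) * dot A e) A)
           (scale ((vz u * vx v - vx u * vz v) * dot A A - (vy u * vz v - vz u * vy v) * dot A e) e))
      (scale (vx u * vy v - vy u * vx v) (cross A e)).
Proof. unfold fr, dot, cross; apply vec_eq; simpl; ring. Qed.

Lemma fr_cross A e u v : dot A A = 1 -> dot e e = 1 -> dot A e = 0 ->
  cross (fr A e u) (fr A e v) = fr A e (cross u v).
Proof.
  intros H1 H2 H3. rewrite fr_cross_gen, H1, H2, H3. unfold fr; apply vec_eq; simpl; ring.
Qed.

Ltac push_fr H1 H2 H3 :=
  repeat first [ rewrite (fr_dot _ _ _ _ H1 H2 H3) | rewrite (fr_cross _ _ _ _ H1 H2 H3)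
               | rewrite fr_add | rewrite fr_sub | rewrite fr_scale ].

Ltac reifyE x0 x1 x2 x3 x4 x5 x6 x7 t :=
  let rf := reifyE x0 x1 x2 x3 x4 x5 x6 x7 in
  let rv := reifyV x0 x1 x2 x3 x4 x5 x6 x7 in
  lazymatch t with
  | ?a + ?b => let x := rf a in let y := rf b in constr:(PA x y)
  | ?a - ?b => let x := rf a in let y := rf b in constr:(PS x y)
  | ?a * ?b => let x := rf a in let y := rf b in constr:(PM x y)
  | - ?a => let x := rf a in constr:(PO x)
  | ?a ^ ?n => let x := rf a in constr:(PP x n)
  | dot ?u ?v => let x := rv u in let y := rv v in constr:(PD x y)
  | IZR ?z => constr:(PC z)
  | R0 => constr:(PC 0)
  | R1 => constr:(PC 1)
  | x0 => constr:(PV 0) | x1 => constr:(PV 1) | x2 => constr:(PV 2) | x3 => constr:(PV 3)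
  | x4 => constr:(PV 4) | x5 => constr:(PV 5) | x6 => constr:(PV 6) | x7 => constr:(PV 7)
  | _ => fail 100 "reifyE" t
  end
with reifyV x0 x1 x2 x3 x4 x5 x6 x7 t :=
  let rf := reifyE x0 x1 x2 x3 x4 x5 x6 x7 in
  let rv := reifyV x0 x1 x2 x3 x4 x5 x6 x7 in
  lazymatch t with
  | add ?u ?v => let x := rv u in let y := rv v in constr:(VA x y)
  | sub ?u ?v => let x := rv u in let y := rv v in constr:(VS x y)
  | cross ?u ?v => let x := rv u in let y := rv v in constr:(VX x y)
  | scale ?s ?u => let x := rf s in let y := rv u in constr:(VSc x y)
  | mkV ?a ?b ?c => let x := rf a in let y := rf b in let z := rf c in constr:(VK x y z)
  | _ => fail 100 "reifyV" t
  end.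

Ltac prove_rel x0 x1 x2 x3 x4 x5 x6 x7 H01 H23 H45 H67 :=
  lazymatch goal with |- ?l = ?r =>
    let a := reifyE x0 x1 x2 x3 x4 x5 x6 x7 l in
    let b := reifyE x0 x1 x2 x3 x4 x5 x6 x7 r in
    change (eeval x0 x1 x2 x3 x4 x5 x6 x7 a = eeval x0 x1 x2 x3 x4 x5 x6 x7 b);
    apply (refl_eq x0 x1 x2 x3 x4 x5 x6 x7 H01 H23 H45 H67);
    vm_compute; reflexivity
  end.

Definition a0 := mkV 1 0 0.
Definition b0 (ca sa : R) := mkV ca sa 0.
Definition c0 ca sa ch sh :=
  add (scale ca a0) (add (scale (ch*ch - sh*sh) (sub (b0 ca sa) (scale ca a0)))
                         (scale (2*sh*ch) (cross a0 (sub (b0 ca sa) (scale ca a0))))).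
Definition d0 ca sa cB sB :=
  add (scale ca (b0 ca sa)) (add (scale cB (sub a0 (scale ca (b0 ca sa))))
                                 (scale (- sB) (cross (b0 ca sa) (sub a0 (scale ca (b0 ca sa)))))).
Definition e0 ca sa ch sh cG sG :=
  let C := c0 ca sa ch sh in
  add (scale ca C) (add (scale cG (sub a0 (scale ca C))) (scale sG (cross C (sub a0 (scale ca C))))).

Definition XX (V N P : V3) := dot (tng N V) (tng P V).
Definition YY (V N P : V3) := dot V (cross (tng N V) (tng P V)).

Lemma poly1 ca sa ch sh cB sB cG sG xd yd xe ye cbv r2 :
  ca^2+sa^2=1 -> ch^2+sh^2=1 -> cB^2+sB^2=1 -> cG^2+sG^2=1 ->
  xd = XX (d0 ca sa cB sB) (e0 ca sa ch sh cG sG) (b0 ca sa) ->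
  yd = YY (d0 ca sa cB sB) (e0 ca sa ch sh cG sG) (b0 ca sa) ->
  xe = XX (e0 ca sa ch sh cG sG) (c0 ca sa ch sh) (d0 ca sa cB sB) ->
  ye = YY (e0 ca sa ch sh cG sG) (c0 ca sa ch sh) (d0 ca sa cB sB) ->
  cbv = dot (e0 ca sa ch sh cG sG) (d0 ca sa cB sB) ->
  r2 = (1 - ca^2) * (1 - cbv^2) ->
  let K := (1-cB)*(yd*ch - xd*sh) - (1-cG)*(ye*ch - xe*sh) in
  let Kq := (1 - (cB*cG + sB*sG))*sh in
  K*(r2 - xd*xe - yd*ye) - Kq*r2*(xe - xd) = 0.
Proof.
  intros H1 H2 H3 H4 -> -> -> -> -> ->. cbv zeta.
  unfold XX, YY, tng, e0, d0, c0, b0, a0.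
  prove_rel ca sa ch sh cB sB cG sG H1 H2 H3 H4.
Qed.

Lemma poly2 ca sa ch sh cB sB cG sG xd yd xe ye cbv r2 :
  ca^2+sa^2=1 -> ch^2+sh^2=1 -> cB^2+sB^2=1 -> cG^2+sG^2=1 ->
  xd = XX (d0 ca sa cB sB) (e0 ca sa ch sh cG sG) (b0 ca sa) ->
  yd = YY (d0 ca sa cB sB) (e0 ca sa ch sh cG sG) (b0 ca sa) ->
  xe = XX (e0 ca sa ch sh cG sG) (c0 ca sa ch sh) (d0 ca sa cB sB) ->
  ye = YY (e0 ca sa ch sh cG sG) (c0 ca sa ch sh) (d0 ca sa cB sB) ->
  cbv = dot (e0 ca sa ch sh cG sG) (d0 ca sa cB sB) ->
  r2 = (1 - ca^2) * (1 - cbv^2) ->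
  let K := (1-cB)*(yd*ch - xd*sh) - (1-cG)*(ye*ch - xe*sh) in
  let Kq := (1 - (cB*cG + sB*sG))*sh in
  K*(xe - xd) - Kq*(r2 - xd*xe + yd*ye) = 0.
Proof.
  intros H1 H2 H3 H4 -> -> -> -> -> ->. cbv zeta.
  unfold XX, YY, tng, e0, d0, c0, b0, a0.
  prove_rel ca sa ch sh cB sB cG sG H1 H2 H3 H4.
Qed.

Lemma two_sin_sin x y : 2 * sin x * sin y = cos (y - x) - cos (y + x).
Proof. rewrite cos_minus, cos_plus; ring. Qed.

Lemma final_alg al be ga de ep r xd yd xe ye :
  0 < r -> xd = r * cos de -> yd = r * sin de -> xe = r * cos ep -> ye = r * sin ep ->
  let ch := cos (al/2) in let sh := sin (al/2) in
  let cB := cos be in let sB := sin be in let cG := cos ga in let sG := sin ga in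
  let r2 := r * r in
  let K := (1-cB)*(yd*ch - xd*sh) - (1-cG)*(ye*ch - xe*sh) in
  let Kq := (1 - (cB*cG + sB*sG))*sh in
  K*(r2 - xd*xe - yd*ye) - Kq*r2*(xe - xd) = 0 ->
  K*(xe - xd) - Kq*(r2 - xd*xe + yd*ye) = 0 ->
  ((1 - cos be) * sin (de - al / 2) - (1 - cos ga) * sin (ep - al / 2))
    * sin ((de - ep) / 2)
  - (1 - cos (be - ga)) * sin (al / 2) * sin ((de + ep) / 2) = 0.
Proof.
  intros Hr -> -> -> ->. cbv zeta. intros P1 P2.
  rewrite !sin_minus, cos_minus.
  set (cd := cos de) in *; set (sd := sin de) in *; set (ce := cos ep) in *; set (se := sin ep) in *.
  set (ch := cos (al/2)) in *; set (sh := sin (al/2)) in *.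
  set (Kt := (1 - cos be) * (sd * ch - cd * sh) - (1 - cos ga) * (se * ch - ce * sh)).
  set (Kq := (1 - (cos be * cos ga + sin be * sin ga)) * sh).
  assert (F1 : Kt * (1 - (cd*ce + sd*se)) - Kq * (ce - cd) = 0).
  { assert (E : r*r*r * (Kt * (1 - (cd*ce + sd*se)) - Kq * (ce - cd)) = 0).
    { rewrite <- P1. unfold Kt, Kq; ring. }
    apply Rmult_integral in E; destruct E as [E|E]; auto.
    exfalso; assert (0 < r*r*r) by (repeat apply Rmult_lt_0_compat; auto); lra. }
  assert (F2 : Kt * (ce - cd) - Kq * (1 - (cd*ce - sd*se)) = 0).
  { assert (E : r*r * (Kt * (ce - cd) - Kq * (1 - (cd*ce - sd*se))) = 0).
    { rewrite <- P2. unfold Kt, Kq; ring. }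
    apply Rmult_integral in E; destruct E as [E|E]; auto.
    exfalso; assert (0 < r*r) by (repeat apply Rmult_lt_0_compat; auto); lra. }
  set (s1 := sin ((de - ep) / 2)). set (s2 := sin ((de + ep) / 2)).
  assert (T1 : 2 * s1 * s1 = 1 - (cd*ce + sd*se)).
  { unfold cd, ce, sd, se. rewrite <- cos_minus.
    replace (de - ep) with (2 * ((de - ep)/2)) by field. rewrite cos_2a_sin. unfold s1; ring. }
  assert (T3 : 2 * s2 * s2 = 1 - (cd*ce - sd*se)).
  { unfold cd, ce, sd, se. rewrite <- cos_plus.
    replace (de + ep) with (2 * ((de + ep)/2)) by field. rewrite cos_2a_sin. unfold s2; ring. }
  assert (T2 : 2 * s1 * s2 = ce - cd).
  { unfold s1, s2. rewrite two_sin_sin.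
    replace ((de + ep) / 2 - (de - ep) / 2) with ep by field.
    replace ((de + ep) / 2 + (de - ep) / 2) with de by field. reflexivity. }
  set (G := Kt * s1 - Kq * s2).
  assert (GG : 2 * G * G = Kt * (Kt * (2*s1*s1) - Kq * (2*s1*s2)) - Kq * (Kt * (2*s1*s2) - Kq * (2*s2*s2)))
    by (unfold G; ring).
  rewrite T1, T2, T3, F1, F2 in GG.
  assert (G = 0) by nra.
  unfold G, Kt, Kq in *. lra.
Qed.

Theorem mainTheorem2 (p : nat -> V3) (a b : R) (n : nat) (g : nat -> V3 -> V3)
  (al be ga de ep : R) :
  a4b_pentagon p a b ->
  tiling p n g ->
  interior_angle p 0 al -> interior_angle p 1 be -> interior_angle p 4 ga ->
  interior_angle p 2 de -> interior_angle p 3 ep ->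
  ((1 - cos be) * sin (de - al / 2) - (1 - cos ga) * sin (ep - al / 2))
    * sin ((de - ep) / 2)
  - (1 - cos (be - ga)) * sin (al / 2) * sin ((de + ep) / 2) = 0.
Proof.
  intros Hpent _ Hal Hbe Hga Hde Hep.
  destruct Hpent as [Hsimp [Hab [Hbd [_ [Hec [Hca _]]]]]].
  destruct Hsimp as [Hunit [Hdist [Hanti _]]].
  assert (U0 : on_sphere (p 0%nat)) by exact (Hunit 0%nat ltac:(lia)).
  assert (U1 : on_sphere (p 1%nat)) by exact (Hunit 1%nat ltac:(lia)).
  assert (U2 : on_sphere (p 2%nat)) by exact (Hunit 2%nat ltac:(lia)).
  assert (U3 : on_sphere (p 3%nat)) by exact (Hunit 3%nat ltac:(lia)).
  assert (U4 : on_sphere (p 4%nat)) by exact (Hunit 4%nat ltac:(lia)).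
  change (sdist (p 0%nat) (p 1%nat) = a) in Hab. change (sdist (p 1%nat) (p 2%nat) = a) in Hbd.
  change (sdist (p 3%nat) (p 4%nat) = a) in Hec. change (sdist (p 4%nat) (p 0%nat) = a) in Hca.
  apply sdist_cos in Hab; auto. apply sdist_cos in Hbd; auto.
  apply sdist_cos in Hec; auto. apply sdist_cos in Hca; auto.
  set (ca := cos a) in *.
  assert (Hca2 : ca^2 < 1).
  { rewrite <- Hab. apply dot_sq_lt; auto.
    - exact (Hdist 0%nat 1%nat ltac:(lia) ltac:(lia) ltac:(lia)).
    - exact (Hanti 0%nat ltac:(lia)). }
  assert (Hcb2 : (dot (p 3%nat) (p 2%nat))^2 < 1).
  { rewrite dot_comm. apply dot_sq_lt; auto.
    - exact (Hdist 2%nat 3%nat ltac:(lia) ltac:(lia) ltac:(lia)).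
    - exact (Hanti 2%nat ltac:(lia)). }
  change (iang (p 0%nat) (p 1%nat) (p 4%nat) al) in Hal.
  change (iang (p 1%nat) (p 2%nat) (p 0%nat) be) in Hbe.
  change (iang (p 4%nat) (p 0%nat) (p 3%nat) ga) in Hga.
  change (iang (p 2%nat) (p 3%nat) (p 1%nat) de) in Hde.
  change (iang (p 3%nat) (p 4%nat) (p 2%nat) ep) in Hep.
  assert (dBA : dot (p 1%nat) (p 0%nat) = ca) by (rewrite dot_comm; exact Hab).
  assert (dDB : dot (p 2%nat) (p 1%nat) = ca) by (rewrite dot_comm; exact Hbd).
  assert (dAC : dot (p 0%nat) (p 4%nat) = ca) by (rewrite dot_comm; exact Hca).
  assert (dCE : dot (p 4%nat) (p 3%nat) = ca) by (rewrite dot_comm; exact Hec).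
  pose proof (iang_R1 _ _ _ _ ca U0 U1 U4 dBA Hca Hca2 Hal) as RA.
  pose proof (iang_R2 _ _ _ _ ca U1 U2 U0 dDB Hab Hca2 Hbe) as RB.
  pose proof (iang_R1 _ _ _ _ ca U4 U0 U3 dAC Hec Hca2 Hga) as RC.
  assert (EC : p 4%nat = add (scale ca (p 0%nat)) (add (scale (cos al) (sub (p 1%nat) (scale ca (p 0%nat))))
                        (scale (sin al) (cross (p 0%nat) (sub (p 1%nat) (scale ca (p 0%nat))))))).
  { rewrite (tng_inv (p 4%nat) (p 0%nat)) at 1. rewrite RA. unfold tng. rewrite dBA, Hca. reflexivity. }
  assert (ED : p 2%nat = add (scale ca (p 1%nat)) (add (scale (cos be) (sub (p 0%nat) (scale ca (p 1%nat))))
                        (scale (- sin be) (cross (p 1%nat) (sub (p 0%nat) (scale ca (p 1%nat))))))).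
  { rewrite (tng_inv (p 2%nat) (p 1%nat)) at 1. rewrite RB. unfold tng. rewrite dDB, Hab. reflexivity. }
  assert (EE : p 3%nat = add (scale ca (p 4%nat)) (add (scale (cos ga) (sub (p 0%nat) (scale ca (p 4%nat))))
                        (scale (sin ga) (cross (p 4%nat) (sub (p 0%nat) (scale ca (p 4%nat))))))).
  { rewrite (tng_inv (p 3%nat) (p 4%nat)) at 1. rewrite RC. unfold tng. rewrite dAC, Hec. reflexivity. }
  unfold on_sphere in U0, U1, U2, U3, U4.
  set (sa := sqrt (1 - ca^2)).
  assert (Hsa : sa * sa = 1 - ca^2) by (apply sqrt_sqrt; lra).
  assert (Hsa0 : 0 < sa) by (apply sqrt_lt_R0; lra).
  set (e := scale (/ sa) (sub (p 1%nat) (scale ca (p 0%nat)))).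
  assert (H2 : dot e e = 1).
  { transitivity ((/sa)^2 * (dot (p 1%nat) (p 1%nat) - 2 * ca * dot (p 0%nat) (p 1%nat) + ca^2 * dot (p 0%nat) (p 0%nat))).
    - unfold e, dot, sub, scale; simpl; ring.
    - rewrite U1, Hab, U0. replace (1 - 2 * ca * ca + ca ^ 2 * 1) with (sa * sa) by lra. field; lra. }
  assert (H3 : dot (p 0%nat) e = 0).
  { transitivity (/sa * (dot (p 0%nat) (p 1%nat) - ca * dot (p 0%nat) (p 0%nat))).
    - unfold e, dot, sub, scale; simpl; ring.
    - rewrite Hab, U0; ring. }
  set (F := fr (p 0%nat) e).
  assert (Fadd : forall u v, add (F u) (F v) = F (add u v)) by (intros; apply fr_add).
  assert (Fsub : forall u v, sub (F u) (F v) = F (sub u v)) by (intros; apply fr_sub).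
  assert (Fscale : forall s u, scale s (F u) = F (scale s u)) by (intros; apply fr_scale).
  assert (Fdot : forall u v, dot (F u) (F v) = dot u v) by (intros; apply fr_dot; auto).
  assert (Fcross : forall u v, cross (F u) (F v) = F (cross u v)) by (intros; apply fr_cross; auto).
  assert (FA : p 0%nat = F a0) by (unfold F, fr, a0; apply vec_eq; simpl; ring).
  assert (FB : p 1%nat = F (b0 ca sa)).
  { unfold F, fr, b0, e; apply vec_eq; simpl; field; lra. }
  clearbody F.
  assert (Cal : cos al = cos (al/2) * cos (al/2) - sin (al/2) * sin (al/2))
    by (rewrite <- cos_2a; f_equal; field).
  assert (Sal : sin al = 2 * sin (al/2) * cos (al/2))
    by (rewrite <- sin_2a; f_equal; field).
  assert (FC : p 4%nat = F (c0 ca sa (cos (al/2)) (sin (al/2)))).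
  { rewrite EC, Cal, Sal, FA, FB.
    repeat first [rewrite Fdot | rewrite Fcross | rewrite Fadd | rewrite Fsub | rewrite Fscale].
    reflexivity. }
  assert (FD : p 2%nat = F (d0 ca sa (cos be) (sin be))).
  { rewrite ED, FA, FB.
    repeat first [rewrite Fdot | rewrite Fcross | rewrite Fadd | rewrite Fsub | rewrite Fscale].
    reflexivity. }
  assert (FE : p 3%nat = F (e0 ca sa (cos (al/2)) (sin (al/2)) (cos ga) (sin ga))).
  { rewrite EE, FC, FA.
    repeat first [rewrite Fdot | rewrite Fcross | rewrite Fadd | rewrite Fsub | rewrite Fscale].
    reflexivity. }
  destruct (iang_gen _ _ _ _ U2 U3 U1 Hde) as [HdX HdY].
  destruct (iang_gen _ _ _ _ U3 U4 U2 Hep) as [HeX HeY].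
  rewrite Hbd in HdX, HdY. rewrite dCE, (dot_comm (p 2%nat) (p 3%nat)) in HeX, HeY.
  set (cb := dot (p 3%nat) (p 2%nat)) in *.
  set (r := sqrt (1 - ca^2) * sqrt (1 - cb^2)).
  assert (Hr0 : 0 < r) by (unfold r; apply Rmult_lt_0_compat; apply sqrt_lt_R0; lra).
  assert (Hrr : r * r = (1 - ca^2) * (1 - cb^2)).
  { unfold r. replace (sqrt (1 - ca ^ 2) * sqrt (1 - cb ^ 2) * (sqrt (1 - ca ^ 2) * sqrt (1 - cb ^ 2)))
      with ((sqrt (1 - ca ^ 2) * sqrt (1 - ca ^ 2)) * (sqrt (1 - cb ^ 2) * sqrt (1 - cb ^ 2))) by ring.
    rewrite !sqrt_sqrt; lra. }
  replace (sqrt (1 - cb ^ 2) * sqrt (1 - ca ^ 2)) with r in HdX, HdY by (unfold r; ring).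
  fold r in HeX, HeY.
  assert (Hcbt : cb = dot (e0 ca sa (cos (al/2)) (sin (al/2)) (cos ga) (sin ga)) (d0 ca sa (cos be) (sin be))).
  { unfold cb. rewrite FE, FD, Fdot. reflexivity. }
  unfold tng in HdX, HdY, HeX, HeY.
  rewrite FD, FE, FB in HdX, HdY. rewrite FC, FD, FE in HeX, HeY.
  repeat first [rewrite Fdot in HdX | rewrite Fcross in HdX | rewrite Fadd in HdX | rewrite Fsub in HdX | rewrite Fscale in HdX].
  repeat first [rewrite Fdot in HdY | rewrite Fcross in HdY | rewrite Fadd in HdY | rewrite Fsub in HdY | rewrite Fscale in HdY].
  repeat first [rewrite Fdot in HeX | rewrite Fcross in HeX | rewrite Fadd in HeX | rewrite Fsub in HeX | rewrite Fscale in HeX].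
  repeat first [rewrite Fdot in HeY | rewrite Fcross in HeY | rewrite Fadd in HeY | rewrite Fsub in HeY | rewrite Fscale in HeY].
  assert (R1 : ca^2 + sa^2 = 1) by (replace (sa^2) with (sa*sa) by ring; lra).
  assert (CS : forall x, cos x ^ 2 + sin x ^ 2 = 1).
  { intro x. pose proof (sin2_cos2 x). unfold Rsqr in *. replace (cos x ^ 2) with (cos x * cos x) by ring.
    replace (sin x ^ 2) with (sin x * sin x) by ring. lra. }
  pose proof (poly1 ca sa (cos (al/2)) (sin (al/2)) (cos be) (sin be) (cos ga) (sin ga)
    (r * cos de) (r * sin de) (r * cos ep) (r * sin ep) cb (r * r) R1 (CS _) (CS _) (CS _)
    (eq_sym HdX) (eq_sym HdY) (eq_sym HeX) (eq_sym HeY) Hcbt Hrr) as P1.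
  pose proof (poly2 ca sa (cos (al/2)) (sin (al/2)) (cos be) (sin be) (cos ga) (sin ga)
    (r * cos de) (r * sin de) (r * cos ep) (r * sin ep) cb (r * r) R1 (CS _) (CS _) (CS _)
    (eq_sym HdX) (eq_sym HdY) (eq_sym HeX) (eq_sym HeY) Hcbt Hrr) as P2.
  exact (final_alg al be ga de ep r _ _ _ _ Hr0 eq_refl eq_refl eq_refl eq_refl P1 P2).
Qed.
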